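(* Consider the Normal Partizan Domination game on the star $K_{1,n}$ ($n\geq 1$) in which every vertex has color $C$. Its value is $*$ if $n$ is odd and $*2$ if $n$ is even.
   Context: Normal Partizan Domination game: a finite graph $G$ has each vertex colored $A$, $B$ or $C$. Alice and Bob alternately select a vertex; Alice may only select vertices colored $A$ or $C$, Bob only vertices colored $B$ or $C$. A vertex $u$ dominates $v$ if $u=v$ or $uv$ is an edge. A vertex may be selected only if it is playable, i.e. it dominates at least one vertex not dominated by the previously selected vertices; the game ends when the selected vertices form a dominating set. Under normal play the player unable to move loses. The game is regarded as a partizan combinatorial game with Alice as Left and Bob as Right, and its value is its value in Conway's combinatorial game theory ($\{X\mid Y\}$ has Left options $X$ and Right options $Y$; $G=H$ iff $G+(-H)$ is a second-player win). Nimbers: $*=\{0\mid 0\}$, $*2=\{0,*\mid 0,*\}$. *)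

(* Defs.v *)
From mathcomp Require Import all_boot.
Set Implicit Arguments.
Unset Strict Implicit.
Unset Printing Implicit Defensive.

Inductive game : Type := Game of seq game & seq game.

Definition lopts (g : game) := let: Game l _ := g in l.
Definition ropts (g : game) := let: Game _ r := g in r.

Fixpoint gadd (g : game) : game -> game :=
  fix gaddg (h : game) : game :=
    match g, h with
    | Game gl gr, Game hl hr =>
        Game ([seq gadd g' h | g' <- gl] ++ [seq gaddg h' | h' <- hl])
             ([seq gadd g' h | g' <- gr] ++ [seq gaddg h' | h' <- hr])
    end.

Fixpoint gneg (g : game) : game :=
  match g with Game l r => Game [seq gneg x | x <- r] [seq gneg x | x <- l] end.

Fixpoint gwins (g : game) : bool * bool :=
  match g with
  | Game l r => (has (fun x => ~~ (gwins x).2) l, has (fun x => ~~ (gwins x).1) r)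
  end.

Definition left_wins_first (g : game) : bool := (gwins g).1.
Definition right_wins_first (g : game) : bool := (gwins g).2.

Definition second_player_win (g : game) : bool :=
  ~~ left_wins_first g && ~~ right_wins_first g.

Definition game_eq (g h : game) : Prop := second_player_win (gadd g (gneg h)).

Definition gzero : game := Game [::] [::].
Definition gstar : game := Game [:: gzero] [:: gzero].
Definition gstar2 : game := Game [:: gzero; gstar] [:: gzero; gstar].

Inductive color := colA | colB | colC.

Section Domination.
Variable V : finType.
Variable adj : rel V.
Variable col : V -> color.

Definition closed_nbhd (u : V) : {set V} := [set v | (u == v) || adj u v].

Definition dominated (S : {set V}) : {set V} := \bigcup_(u in S) closed_nbhd u.

Definition playable (S : {set V}) (v : V) : bool :=
  ~~ (closed_nbhd v \subset dominated S).

Definition alice_may (v : V) : bool := if col v is colB then false else true.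
Definition bob_may (v : V) : bool := if col v is colA then false else true.

(* game tree from the position where the set S has been selected; the fuel
   bounds the number of remaining moves (each move dominates a new vertex) *)
Fixpoint dom_pos (fuel : nat) (S : {set V}) : game :=
  match fuel with
  | 0 => gzero
  | k.+1 =>
      Game [seq dom_pos k (v |: S) | v <- enum V & alice_may v && playable S v]
           [seq dom_pos k (v |: S) | v <- enum V & bob_may v && playable S v]
  end.

Definition domination_game : game := dom_pos #|V|.+1 set0.
End Domination.

Definition star_adj (n : nat) : rel 'I_n.+1 :=
  fun u v => (u != v) && ((val u == 0) || (val v == 0)).
Arguments star_adj n : clear implicits.

(* Main.v *)
Require Import Defs.
From mathcomp Require Import all_boot.
From mathcomp Require Import zify.
From Stdlib Require List.

Set Implicit Arguments.
Unset Strict Implicit.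

Inductive NV : game -> nat -> Prop :=
| NVi l r a :
    (forall x, List.In x l -> exists2 b, NV x b & b <> a) ->
    (forall x, List.In x r -> exists2 b, NV x b & b <> a) ->
    (forall b, b < a -> exists2 x, List.In x l & NV x b) ->
    (forall b, b < a -> exists2 x, List.In x r & NV x b) ->
    NV (Game l r) a.

Fixpoint gsize (g : game) : nat :=
  match g with Game l r => (sumn (map gsize l) + sumn (map gsize r)).+1 end.

Lemma sumn_In x l : List.In x l -> gsize x <= sumn (map gsize l).
Proof.
elim: l => //= y l IH [->|H]; first by lia.
have := IH H; lia.
Qed.

Lemma gsize_l x l r : List.In x l -> gsize x < gsize (Game l r).
Proof. move=> H; have := sumn_In H; rewrite /=; lia. Qed.
Lemma gsize_r x l r : List.In x r -> gsize x < gsize (Game l r).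
Proof. move=> H; have := sumn_In H; rewrite /=; lia. Qed.

Lemma hasT (T : Type) (p : pred T) s x : List.In x s -> p x -> has p s.
Proof. elim: s => //= y s IH [->->//|H px]; by rewrite IH ?orbT. Qed.

Lemma hasF (T : Type) (p : pred T) s : (forall x, List.In x s -> p x = false) -> has p s = false.
Proof.
elim: s => //= y s IH H; rewrite H /=; last by left.
apply: IH => x Hx; apply: H; by right.
Qed.

Lemma In_map (T U : Type) (F : T -> U) s y : List.In y (map F s) -> exists2 x, List.In x s & y = F x.
Proof.
elim: s => //= x s IH [<-|H]; first by exists x; [left|].
case: (IH H) => z Hz ->; exists z => //; by right.
Qed.

Lemma In_map2 (T U : Type) (F : T -> U) s x : List.In x s -> List.In (F x) (map F s).
Proof. elim: s => //= y s IH [->|H]; [by left | right; exact: IH]. Qed.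

Lemma In_cat (T : Type) (s1 s2 : seq T) x : List.In x (s1 ++ s2) -> List.In x s1 \/ List.In x s2.
Proof.
elim: s1 => /= [|y s IH]; first by right.
case=> [->|H]; first by left; left.
case: (IH H) => H'; [left; right | right]; exact: H'.
Qed.

Lemma In_filter (T : Type) (p : pred T) s x : List.In x (filter p s) -> p x.
Proof. elim: s => //= y s IH; case: ifP => py /=; [case=> [<-//|]|]; auto. Qed.

Lemma In_filter2 (T : Type) (p : pred T) s x : List.In x s -> p x -> List.In x (filter p s).
Proof. elim: s => //= y s IH [->->|H px]; first by left. case: ifP => _; [right|]; auto. Qed.

Lemma In_mem (T : eqType) (x : T) s : x \in s -> List.In x s.
Proof. elim: s => //= y s IH; rewrite inE => /orP [/eqP->|H]; [by left|right; auto]. Qed.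

Lemma filter_none (T : Type) (p : pred T) s : (forall x, p x = false) -> filter p s = [::].
Proof. move=> H; elim: s => //= y s ->; by rewrite H. Qed.

Lemma gadd_eq gl gr hl hr : gadd (Game gl gr) (Game hl hr) =
  Game (map (fun x => gadd x (Game hl hr)) gl ++ map (gadd (Game gl gr)) hl)
       (map (fun x => gadd x (Game hl hr)) gr ++ map (gadd (Game gl gr)) hr).
Proof. by []. Qed.

Lemma gwins_eq l r : gwins (Game l r) = (has (fun x => ~~ (gwins x).2) l, has (fun x => ~~ (gwins x).1) r).
Proof. by []. Qed.

Lemma side (p : bool * bool -> bool) (hp : forall c, p (c, c) = c) G H gl hl a b :
  (forall x, List.In x gl -> exists2 c, NV x c & c <> a) ->
  (forall c, c < a -> exists2 x, List.In x gl & NV x c) ->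
  (forall x, List.In x hl -> exists2 c, NV x c & c <> b) ->
  (forall c, c < b -> exists2 x, List.In x hl & NV x c) ->
  (forall x c, List.In x gl -> NV x c -> gwins (gadd x H) = (c != b, c != b)) ->
  (forall y d, List.In y hl -> NV y d -> gwins (gadd G y) = (a != d, a != d)) ->
  has (fun y => ~~ p (gwins y)) (map (fun x => gadd x H) gl ++ map (gadd G) hl) = (a != b).
Proof.
move=> H1 H2 H3 H4 I1 I2.
case: (ltngtP a b) => hab.
- case: (H4 _ hab) => y Hy NVy.
  apply: (hasT (x := gadd G y)); first by apply/List.in_or_app; right; apply: In_map2.
  by rewrite (I2 _ _ Hy NVy) hp eqxx.
- case: (H2 _ hab) => x Hx NVx.
  apply: (hasT (x := gadd x H)); first by apply/List.in_or_app; left; apply: (In_map2 (fun x => gadd x H)).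
  by rewrite (I1 _ _ Hx NVx) hp eqxx.
- subst b; rewrite ?eqxx; apply: hasF => y Hy0; case: (In_cat Hy0) => Hy; case: (In_map Hy) => z Hz ->.
  + case: (H1 _ Hz) => c NVc hc; rewrite (I1 _ _ Hz NVc) hp.
    by apply/negbF/eqP.
  + case: (H3 _ Hz) => c NVc hc; rewrite (I2 _ _ Hz NVc) hp.
    by apply/negbF/eqP => E; apply: hc.
Qed.

Lemma NV_sum k : forall g h a b, gsize g + gsize h < k -> NV g a -> NV h b ->
  gwins (gadd g h) = (a != b, a != b).
Proof.
elim: k => // k IH g h a b Hs Hg Hh.
destruct Hg as [gl gr a Hgl Hgr Hgl' Hgr'].
destruct Hh as [hl hr b Hhl Hhr Hhl' Hhr'].
have NG : NV (Game gl gr) a by constructor.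
have NH : NV (Game hl hr) b by constructor.
rewrite gadd_eq gwins_eq.
congr pair.
- apply: (side (p := snd)) => //.
  + move=> x c Hx NVx; apply: (IH _ _ _ _ _ NVx NH).
    have := gsize_l gr Hx; move: Hs => /=; lia.
  + move=> y d Hy NVy; apply: (IH _ _ _ _ _ NG NVy).
    have := gsize_l hr Hy; move: Hs => /=; lia.
- apply: (side (p := fst)) => //.
  + move=> x c Hx NVx; apply: (IH _ _ _ _ _ NVx NH).
    have := gsize_r gl Hx; move: Hs => /=; lia.
  + move=> y d Hy NVy; apply: (IH _ _ _ _ _ NG NVy).
    have := gsize_r hl Hy; move: Hs => /=; lia.
Qed.

Lemma NV_nil : NV (Game [::] [::]) 0.
Proof. by constructor. Qed.

Lemma dom_posS (V : finType) (adj : rel V) col f S :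
  dom_pos adj col f.+1 S =
  Game [seq dom_pos adj col f (v |: S) | v <- enum V & alice_may col v && playable adj S v]
       [seq dom_pos adj col f (v |: S) | v <- enum V & bob_may col v && playable adj S v].
Proof. by []. Qed.

Section Star.
Variable n : nat.
Hypothesis hn : 0 < n.
Notation V := 'I_n.+1.
Notation D := (dom_pos (star_adj n) (fun _ => colC)).
Notation c := (ord0 : V).

Lemma eq0 (u : V) : (u == c) = (val u == 0).
Proof. by []. Qed.

Lemma dom_mem (S : {set V}) w : (w \in dominated (star_adj n) S) = [exists u in S, (u == w) || star_adj n u w].
Proof.
apply/bigcupP/existsP => [[u uS]|[u /andP[uS H]]].
  by rewrite inE => H; exists u; rewrite uS.
by exists u => //; rewrite inE.
Qed.

Lemma notdom (S : {set V}) v : c \notin S -> v != c -> v \notin S -> v \notin dominated (star_adj n) S.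
Proof.
move=> cS vc vS; rewrite dom_mem; apply/existsP => -[u /andP[uS /orP[/eqP E|]]].
  by move: vS; rewrite -E uS.
rewrite /star_adj => /andP[_ /orP[]].
  by rewrite -eq0 => /eqP E; move: cS; rewrite -E uS.
by rewrite -eq0 (negbTE vc).
Qed.

Lemma playable_leaf (S : {set V}) v : c \notin S -> v != c -> playable (star_adj n) S v = (v \notin S).
Proof.
move=> cS vc; rewrite /playable; case vS: (v \in S) => /=.
  apply/negbF/subsetP => w Hw; rewrite dom_mem; apply/existsP; exists v.
  by rewrite vS /=; rewrite /closed_nbhd inE in Hw.
apply/negP => /subsetP /(_ v); rewrite inE eqxx => /(_ isT).
by apply/negP; apply: notdom => //; rewrite vS.
Qed.

Lemma allin (S : {set V}) v : c \notin S -> #|~: S| = 1 -> v != c -> v \in S.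
Proof.
move=> cS h vc; apply/negPn/negP => vS.
have : [set c; v] \subset ~: S.
  by apply/subsetP => w; rewrite !inE => /orP[]/eqP->; rewrite ?cS ?vS.
move/subset_leq_card; rewrite cards2 h eq_sym vc.
done.
Qed.

Lemma ex_leaf (S : {set V}) m : c \notin S -> #|~: S| = m.+2 -> exists v, (v != c) && (v \notin S).
Proof.
move=> cS h; case: (pickP (fun v => (v != c) && (v \notin S))) => [v Hv|H]; first by exists v.
have : ~: S \subset [set c].
  apply/subsetP => w; rewrite !inE => wS; have := H w; rewrite wS andbT.
  by move/negbT; rewrite negbK.
by move/subset_leq_card; rewrite cards1 h.
Qed.

Lemma card_step (S : {set V}) m v : v \notin S -> #|~: S| = m.+2 -> #|~: (v |: S)| = m.+1.
Proof.
move=> vS h; have h1 := cardsC S; have h2 := cardsC (v |: S).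
rewrite cardsU1 vS in h2; lia.
Qed.

Lemma play_center (S : {set V}) v : c \notin S -> v != c -> v \notin S -> playable (star_adj n) S c.
Proof.
move=> cS vc vS; apply/negP => /subsetP /(_ v).
rewrite inE /star_adj eq_sym vc /= orbT => /(_ isT).
by apply/negP; apply: notdom.
Qed.

Lemma nothing_playable (S : {set V}) v : c \notin S -> #|~: S| = 1 -> playable (star_adj n) S v = false.
Proof.
move=> cS h; case vc: (v == c); last first.
  by rewrite playable_leaf ?vc // allin ?vc.
rewrite (eqP vc); apply/negbF/subsetP => w _; rewrite dom_mem; apply/existsP.
case wc: (w == c); last by exists w; rewrite allin ?wc ?eqxx.
have u1 : (1 < n.+1)%N by [].
have i1 : val (inord 1 : V) = 1 by apply: inordK.
exists (inord 1 : V); rewrite allin //=; last by rewrite eq0 i1.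
by rewrite (eqP wc) /star_adj !eq0 i1.
Qed.

Lemma full_unplayable (S : {set V}) v : c \in S -> playable (star_adj n) S v = false.
Proof.
move=> cS; apply/negbF/subsetP => w _; rewrite dom_mem; apply/existsP; exists c.
rewrite cS /= /star_adj; by case: (c =P w) => //= /eqP ->.
Qed.

Lemma NV_full f (S : {set V}) : c \in S -> NV (D f S) 0.
Proof.
move=> cS; case: f => [|f]; first exact: NV_nil.
rewrite dom_posS !filter_none; try exact: NV_nil.
all: by move=> v; rewrite full_unplayable ?andbF.
Qed.

Definition gv m := if m is 0 then 0 else if odd m then 1 else 2.

Lemma opts_char f (S : {set V}) (p : pred V) (hp : forall v, p v = playable (star_adj n) S v) x :
  List.In x [seq D f (v |: S) | v <- enum V & p v] ->
  exists2 v, playable (star_adj n) S v & x = D f (v |: S).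
Proof.
move=> H; case: (In_map H) => v Hv ->; exists v => //.
by rewrite -hp; apply: In_filter Hv.
Qed.

Lemma opts_in f (S : {set V}) (p : pred V) (hp : forall v, p v = playable (star_adj n) S v) v :
  playable (star_adj n) S v -> List.In (D f (v |: S)) [seq D f (v |: S) | v <- enum V & p v].
Proof.
move=> pv; apply: (In_map2 (fun v => D f (v |: S))); apply: In_filter2; last by rewrite hp.
by apply: In_mem; rewrite mem_enum.
Qed.

Lemma gv_ne m : gv m.+1 <> 0 /\ gv m <> gv m.+1.
Proof. case: m => [|k] //=; rewrite /gv; case: (odd k) => //=. Qed.

Lemma gv_lt m b : b < gv m.+1 -> b = 0 \/ b = gv m.
Proof. rewrite /gv; case: m => [|k] /=; first by case: b => [|[]]; auto.
case: (odd k) => /=; case: b => [|[|[]]] //=; auto. Qed.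

Lemma NV_dom m : forall f (S : {set V}), c \notin S -> #|~: S| = m.+1 -> m < f -> NV (D f S) (gv m).
Proof.
elim: m => [|m IH] [|f] // S cS hS hf.
  { rewrite dom_posS !filter_none; try exact: NV_nil.
  all: by move=> v; rewrite nothing_playable ?andbF. }
have Hopt : forall x, List.In x [seq D f (v |: S) | v <- enum V & true && playable (star_adj n) S v] ->
    exists2 b, NV x b & b <> gv m.+1.
  move=> x /(opts_char (fun v => erefl)) [v pv ->].
  case vc: (v == c).
    exists 0; last by case: (gv_ne m) => H _ H'; apply: H.
    by apply: NV_full; rewrite (eqP vc) setU11.
  exists (gv m); last by case: (gv_ne m).
  move: pv; rewrite playable_leaf ?vc // => vS.
  apply: IH => //; last exact: card_step.
  by rewrite in_setU1 eq_sym vc.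
have Hex : forall b, b < gv m.+1 -> exists2 x, List.In x [seq D f (v |: S) | v <- enum V & true && playable (star_adj n) S v] & NV x b.
  move=> b /gv_lt; case: (ex_leaf cS hS) => v /andP[vc vS] [->|->].
    exists (D f (c |: S)); first exact: (@opts_in f S (fun v => true && playable (star_adj n) S v) (fun v => erefl) c (play_center cS vc vS)).
    by apply: NV_full; rewrite setU11.
  have pv : playable (star_adj n) S v by rewrite playable_leaf.
  exists (D f (v |: S)); first exact: (@opts_in f S (fun v => true && playable (star_adj n) S v) (fun v => erefl) v pv).
  apply: IH => //; last exact: card_step.
  by rewrite in_setU1 eq_sym (negbTE vc).
rewrite dom_posS; constructor; by [apply: Hopt | apply: Hex].
Qed.
End Star.

Lemma NV_star : NV gstar 1.
Proof.
constructor => [x|x|b|b] /=.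
- case=> // <-; exists 0 => //; exact: NV_nil.
- case=> // <-; exists 0 => //; exact: NV_nil.
- case: b => // _; exists gzero; [by left | exact: NV_nil].
- case: b => // _; exists gzero; [by left | exact: NV_nil].
Qed.

Lemma NV_star2 : NV gstar2 2.
Proof.
constructor => [x|x|b|b] /=.
- case=> [<-|[<-|//]]; [exists 0 => //; exact: NV_nil | exists 1 => //; exact: NV_star].
- case=> [<-|[<-|//]]; [exists 0 => //; exact: NV_nil | exists 1 => //; exact: NV_star].
- case: b => [|[|]] // _; [exists gzero; [by left | exact: NV_nil] | exists gstar; [by right; left | exact: NV_star]].
- case: b => [|[|]] // _; [exists gzero; [by left | exact: NV_nil] | exists gstar; [by right; left | exact: NV_star]].
Qed.

Theorem theorem5 (n : nat) (hn : 1 <= n) :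
  game_eq (domination_game (star_adj n) (fun _ => colC))
          (if odd n then gstar else gstar2).
Proof.
rewrite /game_eq /domination_game card_ord.
have HD := @NV_dom n hn n n.+2 set0.
rewrite inE setC0 cardsT card_ord in HD.
have {}HD := HD isT erefl (leqW (ltnSn n)).
have gvn : gv n = if odd n then 1 else 2 by case: n hn {HD}.
rewrite gvn in HD.
rewrite /second_player_win /left_wins_first /right_wins_first.
case: (odd n) HD => HD.
- have -> : gneg gstar = gstar by [].
  by rewrite (NV_sum (k := (gsize (dom_pos (star_adj n) (fun _ => colC) n.+2 set0) + gsize gstar).+1) (ltnSn _) HD NV_star).
- have -> : gneg gstar2 = gstar2 by [].
  by rewrite (NV_sum (k := (gsize (dom_pos (star_adj n) (fun _ => colC) n.+2 set0) + gsize gstar2).+1) (ltnSn _) HD NV_star2).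
Qed.
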